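(* Let $T$ be an infinite periodic tree. Then either $\mathrm{br}(T)>1$, or there exists an integer $d\ge1$ such that $|B(n)|/n^d$ is bounded away from $0$ and $\infty$ (for $n\ge1$).
   Context: $T$ is an infinite locally finite tree rooted at $o$; $|x|$ is the distance from $o$ to $x$, $T^x$ the subtree of descendants of $x$ rooted at $x$, $B(n)=\{x:|x|\le n\}$. For an edge $e=(e^-,e^+)$ with $|e^+|=|e^-|+1$ set $|e|=|e^+|$. A cutset is a set of edges meeting every infinite path from $o$; $\Pi(T)$ is the set of cutsets. The branching number is $\mathrm{br}(T)=\sup\{\lambda>0:\inf_{\pi\in\Pi(T)}\sum_{e\in\pi}\lambda^{-|e|}>0\}$. For an integer $N\ge0$, $T$ is $N$-periodic if for every vertex $x$ there is an adjacency-preserving bijection $f:T^x\to T^{f(x)}$ with $|f(x)|\le N$; $T$ is periodic if it is $N$-periodic for some $N$. *)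

(* Defs.v *)
From HB Require Import structures.
From mathcomp Require Import all_boot all_order all_algebra.
From mathcomp Require Import all_classical all_reals all_analysis.
Set Implicit Arguments. Unset Strict Implicit. Unset Printing Implicit Defensive.
Import Order.TTheory GRing.Theory Num.Theory.
Local Open Scope classical_set_scope.
Local Open Scope ring_scope.

(* A locally finite rooted tree is encoded (Ulam--Harris style) by a
   child-count function  c : seq nat -> nat .  Vertices are the words
   [:: i1; ...; ik] such that each letter is a valid child index of the
   vertex given by the preceding prefix; the root o is [::], the children
   of a vertex s are the words rcons s i with i < c s, and |s| = size s.
   Every locally finite rooted tree is isomorphic to exactly such a tree. *)
Notation tree := (seq nat -> nat).

Fixpoint vert (c : tree) (s : seq nat) : bool :=
  match s with
  | [::] => true
  | i :: t => (i < c [::])%N && vert (fun u => c (i :: u)) t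
  end.

Definition verts (c : tree) : set (seq nat) := [set s | vert c s].

Definition subtree (c : tree) (x : seq nat) : tree := fun u => c (x ++ u).

Definition adj (c : tree) (u v : seq nat) : Prop :=
  [/\ vert c u, vert c v &
      (exists i, v = rcons u i) \/ (exists i, u = rcons v i)].

Definition tree_iso (c1 c2 : tree) : Prop :=
  exists f : seq nat -> seq nat,
    [/\ set_bij (verts c1) (verts c2) f,
        f [::] = [::] &
        forall u v, vert c1 u -> vert c1 v -> (adj c1 u v <-> adj c2 (f u) (f v))].

Definition periodic_N (c : tree) (N : nat) : Prop :=
  forall x, vert c x ->
    exists y, [/\ vert c y, (size y <= N)%N & tree_iso (subtree c x) (subtree c y)].

Definition periodic_tree (c : tree) : Prop := exists N : nat, periodic_N c N.

Definition infinite_tree (c : tree) : Prop := ~ finite_set (verts c).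

Definition ray (c : tree) (p : nat -> seq nat) : Prop :=
  p 0%N = [::] /\ forall n, vert c (p n.+1) /\ exists i, p n.+1 = rcons (p n) i.

(* An edge e = (e^-, e^+) is identified with its endpoint e^+ (a non-root
   vertex); then |e| = size e^+. *)
Definition edge (c : tree) (e : seq nat) : Prop := vert c e /\ e <> [::].

Definition cutset (c : tree) (pi : set (seq nat)) : Prop :=
  pi `<=` edge c /\ forall p, ray c p -> exists n, pi (p n.+1).

Definition cut_inf {R : realType} (c : tree) (lam : R) : \bar R :=
  ereal_inf [set \esum_(e in pi) ((lam ^- size e)%:E) | pi in cutset c].

Definition br {R : realType} (c : tree) : \bar R :=
  ereal_sup [set lam%:E | lam in [set lam : R | 0 < lam /\ (0 < cut_inf c lam)%E]].

(* enumeration of the ball B(n) = {x : |x| <= n} *)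
Fixpoint ball (c : tree) (n : nat) : seq (seq nat) :=
  match n with
  | 0%N => [:: [::]]
  | n'.+1 => [::] :: flatten [seq [seq i :: u | u <- ball (fun u => c (i :: u)) n']
                              | i <- iota 0 (c [::])]
  end.

Definition ball_card (c : tree) (n : nat) : nat := size (ball c n).

(* Main.v *)
Require Import Defs.
From HB Require Import structures.
From mathcomp Require Import all_boot all_order all_algebra.
From mathcomp Require Import all_classical all_reals all_analysis.
From mathcomp Require Import zify lra.
Import Order.TTheory GRing.Theory Num.Theory.

Module Part1.
Local Open Scope classical_set_scope.

Set Implicit Arguments. Unset Strict Implicit. Unset Printing Implicit Defensive.

Section TreeBasics.
Implicit Types (c : tree) (x y u v w s : seq nat).

Lemma vert_cat c x w : vert c (x ++ w) = vert c x && vert (subtree c x) w.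
Proof.
elim: x c => [|i x IH] c /=; first by [].
by rewrite IH andbA.
Qed.

Lemma vert_rcons c x i : vert c (rcons x i) = vert c x && (i < c x)%N.
Proof. by rewrite -cats1 vert_cat /= /subtree cats0 andbT. Qed.

Lemma subtree_cat c x w : subtree (subtree c x) w = subtree c (x ++ w).
Proof. by apply: boolp.funext => u; rewrite /subtree catA. Qed.

Lemma ball_cardS c n : ball_card c n.+1 =
  (\sum_(i <- iota 0 (c [::])) ball_card (fun u => c (i :: u)) n).+1.
Proof.
rewrite /ball_card /= size_flatten /shape -map_comp sumnE big_map.
by apply: congr1; apply: eq_bigr => i _ /=; rewrite size_map.
Qed.

Lemma ball_card_sub c x n : ball_card (subtree c x) n.+1 =
  (\sum_(j <- iota 0 (c x)) ball_card (subtree c (rcons x j)) n).+1.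
Proof.
rewrite ball_cardS /subtree cats0; congr (_.+1); apply: eq_bigr => j _.
by congr (ball_card _ _); apply: boolp.funext => u; rewrite cat_rcons.
Qed.

Lemma ball_card0 c : ball_card c 0 = 1%N.
Proof. by []. Qed.

Lemma ball_card_ge1 c n : (1 <= ball_card c n)%N.
Proof. by case: n => [|n]; rewrite ?ball_cardS. Qed.

Lemma ball_card_leS c n : (ball_card c n <= ball_card c n.+1)%N.
Proof.
elim: n c => [|n IH] c; first by rewrite ball_cardS.
rewrite [X in (X <= _)%N]ball_cardS ball_cardS ltnS; apply: leq_sum => i _; exact: IH.
Qed.

Lemma ball_card_mono c n m : (n <= m)%N -> (ball_card c n <= ball_card c m)%N.
Proof.
move=> /subnKC <-; elim: (m - n)%N => [|k IH]; first by rewrite addn0.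
by rewrite addnS (leq_trans IH) // ball_card_leS.
Qed.

Lemma ball_mem c n s : (s \in Defs.ball c n) = vert c s && (size s <= n)%N.
Proof.
elim: n c s => [|n IH] c s /=.
  by rewrite inE; case: s => [|i s]; rewrite /= ?andbF.
rewrite inE; case: s => [|i s] //=.
apply/flatten_mapP/idP => [[j]|/andP[/andP[ic vs] ss]].
  rewrite mem_iota add0n => /andP[_ jc] /mapP[t] ; rewrite IH => /andP[vt st] [-> ->].
  by rewrite jc vt.
by exists i; rewrite ?mem_iota ?add0n //; apply/mapP; exists s; rewrite // IH vs.
Qed.

End TreeBasics.

End Part1.
Import Part1.

Module Part2.
Local Open Scope classical_set_scope.
Set Implicit Arguments. Unset Strict Implicit. Unset Printing Implicit Defensive.

Lemma catIl (a x y : seq nat) : a ++ x = a ++ y -> x = y.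
Proof. by move=> /(congr1 (drop (size a))); rewrite !drop_size_cat. Qed.

Lemma adj_cat c a w1 w2 : vert c a ->
  adj (subtree c a) w1 w2 <-> adj c (a ++ w1) (a ++ w2).
Proof.
move=> va; rewrite /adj !vert_cat va /=; split.
  case=> v1 v2 [[i e]|[i e]]; split=> //.
    by left; exists i; rewrite e rcons_cat.
  by right; exists i; rewrite e rcons_cat.
case=> v1 v2 [[i e]|[i e]]; split=> //.
  by left; exists i; apply: (@catIl a); rewrite -rcons_cat.
by right; exists i; apply: (@catIl a); rewrite -rcons_cat.
Qed.

Section IsoFacts.
Variables (c1 c2 : tree) (f : seq nat -> seq nat).
Hypothesis bij : set_bij (verts c1) (verts c2) f.
Hypothesis f0 : f [::] = [::].
Hypothesis fadj : forall u v, vert c1 u -> vert c1 v -> (adj c1 u v <-> adj c2 (f u) (f v)).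

Lemma iso_vert u : vert c1 u -> vert c2 (f u).
Proof. by case: bij => + _ _; apply. Qed.

Lemma iso_inj u v : vert c1 u -> vert c1 v -> f u = f v -> u = v.
Proof. by move=> vu vv; case: bij => _ inj _; apply: inj; apply/mem_set. Qed.

Lemma iso_surj v : vert c2 v -> exists u, vert c1 u /\ f u = v.
Proof. by case: bij => _ _ /[apply] -[u]; exists u. Qed.

Lemma adj_up c p i : vert c (rcons p i) -> adj c p (rcons p i).
Proof.
move=> v; split=> //; first by move: v; rewrite vert_rcons => /andP[].
by left; exists i.
Qed.

Lemma iso_size_aux n u : (size u <= n)%N -> vert c1 u -> size (f u) = size u.
Proof.
elim: n u => [|n IH] u.
  by case: u => //= _ _; rewrite f0.
case/lastP: u => [|p i]; first by rewrite f0.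
rewrite size_rcons ltnS => sp vu.
have vp : vert c1 p by move: vu; rewrite vert_rcons => /andP[].
have [_ _ [[j e]|[j e]]] := (fadj vp vu).1 (adj_up vu).
  by rewrite e size_rcons IH.
case/lastP: p sp vp vu e => [|q k] sp vp vu e.
  by move: e; rewrite f0; case: (f _).
have vq : vert c1 q by move: vp; rewrite vert_rcons => /andP[].
have sq : (size q <= n)%N by move: sp; rewrite size_rcons; lia.
have [_ _ [[j' e']|[j' e']]] := (fadj vq vp).1 (adj_up vp).
  move: e'; rewrite e => /rcons_inj [] /(iso_inj vu vq) => equ _.
  by move: (congr1 size equ); rewrite !size_rcons; lia.
move: (congr1 size e'); rewrite size_rcons (IH q) // (IH (rcons q k)) //.
rewrite size_rcons; lia.
Qed.

Lemma iso_size u : vert c1 u -> size (f u) = size u.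
Proof. exact: (@iso_size_aux (size u)). Qed.

Lemma iso_rcons p i : vert c1 (rcons p i) -> exists j, f (rcons p i) = rcons (f p) j.
Proof.
move=> vu; have vp : vert c1 p by move: vu; rewrite vert_rcons => /andP[].
have [_ _ [[j e]|[j e]]] := (fadj vp vu).1 (adj_up vu); first by exists j.
by move: (congr1 size e); rewrite size_rcons !iso_size // size_rcons; lia.
Qed.

Lemma iso_take a k : vert c1 a -> take k (f a) = f (take k a).
Proof.
elim/last_ind: a => [|p i IH] va; first by rewrite f0.
have vp : vert c1 p by move: va; rewrite vert_rcons => /andP[].
have [j e] := iso_rcons va; rewrite e.
have sp := iso_size vp.
case: (leqP k (size p)) => hk.
  by rewrite -!cats1 !takel_cat ?sp // IH.
by rewrite !take_oversize ?size_rcons ?sp.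
Qed.

Lemma iso_cat a w : vert c1 (a ++ w) -> f (a ++ w) = f a ++ drop (size a) (f (a ++ w)).
Proof.
move=> v; have va : vert c1 a by move: v; rewrite vert_cat => /andP[].
by rewrite -[in LHS](cat_take_drop (size a) (f (a ++ w))) iso_take // take_size_cat.
Qed.

Lemma iso_sub a : vert c1 a -> tree_iso (subtree c1 a) (subtree c2 (f a)).
Proof.
move=> va; have va2 := iso_vert va; have sa := iso_size va.
exists (fun w => drop (size a) (f (a ++ w))); split.
- split.
  + move=> w /= vw.
    have v : vert c1 (a ++ w) by rewrite vert_cat va.
    by rewrite /verts /=; have := iso_vert v; rewrite {1}(iso_cat v) vert_cat => /andP[_].
  + move=> w1 w2 /set_mem vw1 /set_mem vw2 e.
    have v1 : vert c1 (a ++ w1) by rewrite vert_cat va.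
    have v2 : vert c1 (a ++ w2) by rewrite vert_cat va.
    apply: (@catIl a); apply: iso_inj => //.
    by rewrite (iso_cat v1) (iso_cat v2) e.
  + move=> w' /= vw'.
    have v2 : vert c2 (f a ++ w') by rewrite vert_cat va2.
    have [v [vv fv]] := iso_surj v2.
    have vt : vert c1 (take (size a) v).
      by move: vv; rewrite -{1}(cat_take_drop (size a) v) vert_cat => /andP[].
    have et : take (size a) v = a.
      apply: iso_inj => //; rewrite -iso_take // fv.
      by rewrite take_size_cat.
    exists (drop (size a) v) => /=.
      by move: vv; rewrite -{1}(cat_take_drop (size a) v) et vert_cat va.
    have -> : a ++ drop (size a) v = v by rewrite -{1}et cat_take_drop.
    by rewrite fv -sa drop_size_cat.
- by rewrite cats0 drop_oversize // sa.
- move=> u v vu vv.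
  have v1 : vert c1 (a ++ u) by rewrite vert_cat va.
  have v2 : vert c1 (a ++ v) by rewrite vert_cat va.
  rewrite adj_cat // fadj // adj_cat // -!iso_cat //.
Qed.

End IsoFacts.

Lemma tree_iso_sym c1 c2 : tree_iso c1 c2 -> tree_iso c2 c1.
Proof.
case=> f [bij f0 fadj].
pose g v := match boolp.pselect (exists u, vert c1 u /\ f u = v) with
  | left h => proj1_sig (boolp.cid h) | right _ => [::] end.
have gP v : vert c2 v -> vert c1 (g v) /\ f (g v) = v.
  move=> vv; rewrite /g; case: boolp.pselect => [h|nh].
    by case: (boolp.cid h).
  by case: nh; apply: (iso_surj bij).
have gf u : vert c1 u -> g (f u) = u.
  move=> vu; have [h1 h2] := gP _ (iso_vert bij vu).
  exact: (iso_inj bij).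
exists g; split.
- split.
  + by move=> v /= /gP [].
  + move=> v1 v2 /set_mem vv1 /set_mem vv2 e.
    by rewrite -(gP _ vv1).2 -(gP _ vv2).2 e.
  + by move=> u /= vu; exists (f u); [exact: (iso_vert bij)| exact: gf].
- by rewrite -{1}f0 gf.
- move=> v1 v2 vv1 vv2; have [a1 b1] := gP _ vv1; have [a2 b2] := gP _ vv2.
  by rewrite fadj // b1 b2.
Qed.

Lemma tree_iso_trans c1 c2 c3 : tree_iso c1 c2 -> tree_iso c2 c3 -> tree_iso c1 c3.
Proof.
case=> f [bf f0 fadj]; case=> h [bh h0 hadj].
exists (h \o f); split.
- split.
  + by move=> u /= vu; apply: (iso_vert bh); apply: (iso_vert bf).
  + move=> u v /set_mem vu /set_mem vv /= e.
    apply: (iso_inj bf) => //; apply: (iso_inj bh) => //; exact: (iso_vert bf).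
  + move=> w /= vw; have [v [vv <-]] := iso_surj bh vw.
    by have [u [vu <-]] := iso_surj bf vv; exists u.
- by rewrite /= f0 h0.
- move=> u v vu vv /=; rewrite fadj // hadj //; exact: (iso_vert bf).
Qed.

Lemma tree_iso_refl c : tree_iso c c.
Proof.
exists id; split => //; split => //.
- by move=> u vu; exists u.
Qed.

Lemma iso_ball c1 c2 n : tree_iso c1 c2 -> ball_card c1 n = ball_card c2 n.
Proof.
elim: n c1 c2 => [|n IH] c1 c2 iso12; first by [].
have [f [bij f0 fadj]] := iso12.
rewrite !ball_cardS; congr (_.+1).
pose sg i := head 0%N (f [:: i]).
have fi i : (i < c1 [::])%N -> f [:: i] = [:: sg i] /\ (sg i < c2 [::])%N.
  move=> ic; have vi : vert c1 [:: i] by rewrite /= ic.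
  have := iso_size bij f0 fadj vi; have := iso_vert bij vi.
  by rewrite /sg; case: (f [:: i]) => [|j [|]] //= /andP[jc _] _; split.
have -> : \sum_(i <- iota 0 (c1 [::])) ball_card (fun u => c1 (i :: u)) n
        = \sum_(i <- iota 0 (c1 [::])) ball_card (fun u => c2 (sg i :: u)) n.
  rewrite big_seq_cond [RHS]big_seq_cond; apply: eq_bigr => i /andP[].
  rewrite mem_iota add0n => /andP[_ ic] _.
  apply: IH; have [e _] := fi i ic.
  have vi : vert c1 [:: i] by rewrite /= ic.
  by have := iso_sub bij f0 fadj vi; rewrite e.
rewrite -(big_map sg xpredT (fun j => ball_card (fun u => c2 (j :: u)) n)).
apply: perm_big; apply: uniq_perm.
- rewrite map_inj_in_uniq ?iota_uniq // => i i'.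
  rewrite !mem_iota !add0n => /andP[_ h1] /andP[_ h2] e.
  have [e1 _] := fi _ h1; have [e2 _] := fi _ h2.
  have : [:: i] = [:: i'] by apply: (iso_inj bij); rewrite /= ?h1 ?h2 // e1 e2 e.
  by case.
- exact: iota_uniq.
- move=> j; rewrite mem_iota add0n /=; apply/mapP/idP => [[i]|jc].
    by rewrite mem_iota add0n => /andP[_ /fi[_ h]] ->.
  have vj : vert c2 [:: j] by rewrite /= jc.
  have [u [vu fu]] := iso_surj bij vj.
  have su := iso_size bij f0 fadj vu; rewrite fu in su.
  case: u su vu fu => [|i [|]] //= _ /andP[ic _] fu.
  by exists i; rewrite ?mem_iota ?add0n ?ic //; rewrite /sg fu.
Qed.

End Part2.
Import Part2.

Module Part3.
Set Implicit Arguments. Unset Strict Implicit. Unset Printing Implicit Defensive.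

Definition up (g : nat -> nat) e := exists b, forall n, g n <= b * n.+1 ^ e.
Definition lo (g : nat -> nat) e := exists a, forall n, n.+1 ^ e <= a * g n.

Lemma expn_mono m n e : m <= n -> m ^ e <= n ^ e.
Proof. by move=> h; elim: e => [|e IH]; rewrite ?expn0 // !expnS leq_mul. Qed.

Lemma expn_ge1 n e : 1 <= n.+1 ^ e.
Proof. by rewrite expn_gt0. Qed.

Lemma diffpowD Y D k : (Y + D) ^ k.+1 <= Y ^ k.+1 + k.+1 * D * (Y + D) ^ k.
Proof.
elim: k => [|k IH]; first by rewrite !expn1 expn0; lia.
have h1 : Y ^ k.+1 <= (Y + D) ^ k.+1 by apply: expn_mono; lia.
rewrite (expnS (Y + D) k.+1) (expnS Y k.+1).
have h2 : (Y + D) * (Y + D) ^ k.+1 <= (Y + D) * (Y ^ k.+1 + k.+1 * D * (Y + D) ^ k).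
  by rewrite leq_mul2l IH orbT.
apply: (leq_trans h2).
move: h1; rewrite (expnS (Y + D) k).
set P := (Y + D) ^ k; set Q := Y ^ k.+1 => h1.
nia.
Qed.

Lemma diffpow X Y k : Y <= X -> X ^ k.+1 <= Y ^ k.+1 + k.+1 * (X - Y) * X ^ k.
Proof. by move=> /subnKC {1 3}<-; apply: diffpowD. Qed.

Lemma up_mono g d e : up g d -> d <= e -> up g e.
Proof.
move=> [b hb] de; exists b => n; apply: (leq_trans (hb n)).
by rewrite leq_mul2l leq_pexp2l ?orbT.
Qed.

Lemma up_add g h e : up g e -> up h e -> up (fun n => g n + h n) e.
Proof.
move=> [b1 h1] [b2 h2]; exists (b1 + b2) => n; rewrite mulnDl.
exact: leq_add.
Qed.

Lemma up_const k e : up (fun _ => k) e.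
Proof. by exists k => n; rewrite leq_pmulr ?expn_ge1. Qed.

Lemma up_sum (I : eqType) (s : seq I) (F : I -> nat -> nat) e :
  (forall i, i \in s -> up (F i) e) -> up (fun n => \sum_(i <- s) F i n) e.
Proof.
elim: s => [|i s IH] hs.
  by exists 0 => n; rewrite big_nil.
have := up_add (hs i (mem_head _ _)) (IH (fun j hj => hs j (@mem_behead _ (i :: s) _ hj))).
by case=> b hb; exists b => n; rewrite big_cons.
Qed.

Lemma up_shift g e k : up g e -> up (fun n => g (n + k)) e.
Proof.
move=> [b hb]; exists (b * k.+1 ^ e) => n; apply: (leq_trans (hb _)).
rewrite -mulnA leq_mul2l -expnMn; apply/orP; right; apply: expn_mono; nia.
Qed.

Lemma lo_le g h e : lo h e -> (forall n, h n <= g n) -> lo g e.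
Proof.
by move=> [a ha] hg; exists a => n; rewrite (leq_trans (ha n)) // leq_mul2l hg orbT.
Qed.

Lemma lo_one g : (forall n, 1 <= g n) -> lo g 0.
Proof. by move=> h; exists 1 => n; rewrite expn0 mul1n. Qed.

Lemma step1 B O e : B 0 = 1 -> (forall n, B n.+1 = (O n).+1) -> up O e ->
  (lo O e \/ e = 0) -> up B e /\ lo B e.
Proof.
move=> B0 BS [b hb] hlo; split.
  exists b.+1 => -[|n]; first by rewrite B0 exp1n muln1.
  rewrite BS mulSn addnC -addn1 leq_add ?expn_ge1 //.
  by rewrite (leq_trans (hb n)) // leq_mul2l expn_mono ?orbT.
have Bge n : 1 <= B n by case: n => [|n]; rewrite ?B0 ?BS.
case: hlo => [[a ha]|->]; last exact: lo_one.
exists (2 ^ e * a).+1 => -[|n]; first by rewrite B0 exp1n muln1.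
rewrite BS; apply: (@leq_trans (2 ^ e * n.+1 ^ e)).
  by rewrite -expnMn expn_mono //; lia.
have := ha n; set P := 2 ^ e; set Q := n.+1 ^ e; nia.
Qed.

Lemma strong_ind (P : nat -> Prop) : (forall n, (forall m, m < n -> P m) -> P n) -> forall n, P n.
Proof.
move=> h n; elim: n.+1 {-2}n (ltnSn n) => [|k IH] m hm //.
apply: h => m' hm'; apply: IH; exact: leq_trans hm' _.
Qed.

Lemma stepP B Sg e p : 0 < p -> (forall n, B (n + p) = Sg n + B n) ->
  (forall n, 1 <= B n) -> up Sg e -> lo Sg e -> up B e.+1 /\ lo B e.+1.
Proof.
move=> p0 BP B1 [bS hS] [aS hSl]; split.
  pose M := \sum_(k < p) B k.
  exists (bS + M); apply: strong_ind => n IH.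
  case: (ltnP n p) => hnp.
    have : B n <= M by rewrite /M (bigD1 (Ordinal hnp)) //= leq_addr.
    move=> h; apply: (leq_trans h); apply: (@leq_trans (bS + M)); first exact: leq_addl.
    by rewrite leq_pmulr ?expn_ge1.
  have [m en] : exists m, n = m + p by exists (n - p); lia.
  subst n.
  rewrite BP; have lmp : m < m + p by lia.
  have h1 := hS m; have h2 := IH m lmp.
  have h3 : m.+1 ^ e + m.+1 ^ e.+1 <= (m + p).+1 ^ e.+1.
    rewrite !expnS; have : m.+1 ^ e <= (m + p).+1 ^ e by apply: expn_mono; lia.
    set P := m.+1 ^ e; set Q := (m + p).+1 ^ e; nia.
  apply: (leq_trans (leq_add h1 h2)); apply: (@leq_trans ((bS + M) * (m.+1 ^ e + m.+1 ^ e.+1))).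
    by rewrite mulnDr leq_add // leq_mul2r leq_addr orbT.
  by rewrite leq_mul2l h3 orbT.
exists (e.+1 * p * p.+1 ^ e * aS + p ^ e.+1); apply: strong_ind => n IH.
case: (ltnP n p) => hnp.
  apply: (@leq_trans (p ^ e.+1)); first by apply: expn_mono.
  by rewrite -[X in X <= _]muln1 leq_mul ?leq_addl // B1.
have [m en] : exists m, n = m + p by exists (n - p); lia.
  subst n.
have lmp : m < m + p by lia.
rewrite BP; have h2 := IH m lmp; have h1 := hSl m.
have h3 := diffpow e (_ : m.+1 <= (m + p).+1); rewrite subSS addKn in h3.
have h4 : (m + p).+1 ^ e <= p.+1 ^ e * m.+1 ^ e.
  by rewrite -expnMn expn_mono //; nia.
apply: (leq_trans (h3 ltac:(lia))).
rewrite mulnDr; set A := e.+1 * p * p.+1 ^ e * aS + p ^ e.+1.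
apply: (@leq_trans (A * Sg m + m.+1 ^ e.+1)); last by rewrite leq_add2l.
rewrite addnC leq_add2r.
apply: (@leq_trans (e.+1 * p * (p.+1 ^ e * (aS * Sg m)))).
  rewrite leq_mul2l (leq_trans h4) ?orbT // leq_mul2l h1 orbT //.
rewrite /A mulnDl -!mulnA leq_addr //.
Qed.

End Part3.
Import Part3.

Module Part4.
Local Open Scope classical_set_scope.
Set Implicit Arguments. Unset Strict Implicit. Unset Printing Implicit Defensive.

Lemma up_ext g h e : (forall n, g n = h n) -> up h e -> up g e.
Proof. by move=> E [b hb]; exists b => n; rewrite E. Qed.

Lemma leq_sum_mem (I : eqType) (s : seq I) (F : I -> nat) i :
  i \in s -> (F i <= \sum_(j <- s) F j)%N.
Proof.
elim: s => [|k s IH] //; rewrite inE big_cons => /orP[/eqP ->|/IH h].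
  exact: leq_addr.
exact: leq_trans h (leq_addl _ _).
Qed.

Lemma max_witness (I : eqType) (s : seq I) (F : I -> nat) :
  s != [::] -> exists2 w, w \in s & F w = \max_(j <- s) F j.
Proof.
elim: s => [|k s IH] // _; rewrite big_cons.
case: s IH => [|k' s] IH.
  by exists k; rewrite ?mem_head // big_nil maxn0.
have [w ws ew] := IH isT.
case: (leqP (\max_(j <- k' :: s) F j) (F k)) => h.
  by exists k; rewrite ?mem_head // (maxn_idPl h).
exists w; first by rewrite inE ws orbT.
by rewrite ?(maxn_idPr (ltnW h)) ew.
Qed.

Lemma count_le_in (T : eqType) (a b : pred T) (s : seq T) :
  (forall x, x \in s -> a x -> b x) -> (count a s <= count b s)%N.
Proof.
elim: s => [|k s IH] // hab /=.
have hab' : forall x, x \in s -> a x -> b x by move=> x xs; apply: hab; rewrite inE xs orbT.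
have := IH hab'.
have : (a k <= b k)%N by case/boolP: (a k) => // ak; rewrite (hab k) ?mem_head.
lia.
Qed.

Lemma count_lt (T : eqType) (a b : pred T) (s : seq T) y :
  (forall x, x \in s -> a x -> b x) -> y \in s -> b y -> ~~ a y ->
  (count a s < count b s)%N.
Proof.
elim: s => [|k s IH] // hab; rewrite inE => /orP[/eqP ->|ys] hb na /=.
  rewrite hb (negbTE na) add0n add1n ltnS.
  apply: count_le_in => x xs /=; apply: hab; by rewrite inE xs orbT.
have hab' : forall x, x \in s -> a x -> b x by move=> x xs; apply: hab; rewrite inE xs orbT.
have := IH hab' ys hb na.
have : (a k <= b k)%N by case/boolP: (a k) => // ak; rewrite (hab k) ?mem_head.
lia.
Qed.

Section Poly.
Variables (c : tree) (N : nat).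
Hypothesis per : forall x, vert c x ->
  exists y, [/\ vert c y, (size y <= N)%N & tree_iso (subtree c x) (subtree c y)].

Definition Bx x := ball_card (subtree c x).
Definition isoV x y := tree_iso (subtree c x) (subtree c y).
Definition reps := Defs.ball c N.
Definition mm x := count (fun y => `[< exists z, vert c (x ++ z) /\ isoV (x ++ z) y >]) reps.

Definition Eprop := exists x a b, [/\ vert c (x ++ a), vert c (x ++ b), a != [::] & b != [::]] /\
   [/\ isoV (x ++ a) x, isoV (x ++ b) x &
   exists t, [/\ (t < size a)%N, (t < size b)%N & nth 0%N a t != nth 0%N b t]].

Lemma mm_lt x w : vert c x -> (forall z, vert c (w ++ z) -> ~ isoV (w ++ z) x) ->
  (exists r, w = x ++ r) -> (mm w < mm x)%N.
Proof.
move=> vx hw [r wr].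
have [y0 [vy sy ixy]] := per vx.
apply: (@count_lt _ _ _ _ y0).
- move=> y _ /asboolP [z [vz iz]]; apply/asboolP; exists (r ++ z).
  by rewrite catA -wr.
- by rewrite /reps ball_mem vy sy.
- by apply/asboolP; exists [::]; rewrite cats0.
- apply/negP => /asboolP [z [vz iz]]; apply: (hw z vz).
  exact: tree_iso_trans iz (tree_iso_sym ixy).
Qed.

Lemma poly_growth : ~ Eprop -> forall x, vert c x ->
  exists d, up (Bx x) d /\ lo (Bx x) d.
Proof.
move=> nE; suff H : forall k x, (mm x < k)%N -> vert c x ->
    exists d, up (Bx x) d /\ lo (Bx x) d.
  by move=> x; apply: H (ltnSn _).
elim=> [|k IHk] x // hk vx.
have IH : forall w, (mm w < mm x)%N -> vert c w -> exists d, up (Bx w) d /\ lo (Bx w) d.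
  by move=> w h; apply: IHk; lia.
have [D HD] : {D : seq nat -> nat & forall w, (vert c w /\ (mm w < mm x)%N) ->
   up (Bx w) (D w) /\ lo (Bx w) (D w)}.
  apply: (@boolp.choice _ _ (fun w d => (vert c w /\ (mm w < mm x)%N) -> up (Bx w) d /\ lo (Bx w) d)).
  move=> w; case: (boolp.pselect (vert c w /\ (mm w < mm x)%N)) => [[h1 h2]|h].
    by have [d hd] := IH w h2 h1; exists d.
  by exists 0%N.
case: (boolp.pselect (exists s, [/\ s != [::], vert c (x ++ s) & isoV (x ++ s) x]))
  => [[s [s0 vs iss]]|ns]; last first.
  pose kids := [seq rcons x j | j <- iota 0 (c x)].
  have kv : forall w, w \in kids -> vert c w /\ (mm w < mm x)%N.
    move=> w /mapP [j]; rewrite mem_iota add0n => /andP[_ jc] ->.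
    have vw : vert c (rcons x j) by rewrite vert_rcons vx jc.
    split => //; apply: mm_lt => //; last by exists [:: j]; rewrite cats1.
    move=> z vz iz; apply: ns; exists (j :: z); rewrite -cat_rcons; split => //.
  pose e := \max_(w <- kids) D w.
  have := @step1 (Bx x) (fun n => \sum_(w <- kids) Bx w n) e.
  case => //.
  - by move=> n; rewrite /Bx ball_card_sub big_map.
  - apply: up_sum => w wk; have [h _] := HD w (kv w wk); apply: up_mono h _.
    exact: (leq_bigmax_seq _ wk isT).
  - case: (eqVneq kids [::]) => [ek|kn]; first by right; rewrite /e ek big_nil.
    left; have [w wk ew] := max_witness D kn; have [_ h] := HD w (kv w wk).
    rewrite /e -ew; apply: lo_le h _ => n; exact: (leq_sum_mem (fun w => Bx w n) wk).
  - by move=> h1 h2; exists e.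
have p0 : (0 < size s)%N by rewrite lt0n size_eq0.
set p := size s in p0.
pose u t := x ++ take t s.
have uv : forall t, vert c (u t).
  by move=> t; move: vs; rewrite -(cat_take_drop t s) catA vert_cat => /andP[].
pose st t := nth 0%N s t.
have uS : forall t, (t < p)%N -> u t.+1 = rcons (u t) (st t).
  by move=> t tp; rewrite /u (take_nth 0%N tp) rcons_cat.
have stc : forall t, (t < p)%N -> (st t < c (u t))%N.
  by move=> t tp; have := uv t.+1; rewrite uS // vert_rcons => /andP[].
pose kids t := [seq rcons (u t) j | j <- iota 0 (c (u t)) & j != st t].
pose O t n := \sum_(w <- kids t) Bx w n.
have spine : forall t n, (t < p)%N -> Bx (u t) n.+1 = (Bx (u t.+1) n + O t n).+1.
  move=> t n tp; rewrite /Bx ball_card_sub; congr (_.+1).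
  rewrite (bigD1_seq (st t)) ?mem_iota ?add0n ?stc ?iota_uniq //= uS //.
  by rewrite /O big_map big_filter.
have unroll : forall t, (t <= p)%N -> forall n, Bx x (n + t) =
    \sum_(0 <= t' < t) (O t' (n + (t - t'.+1))).+1 + Bx (u t) n.
  elim=> [|t IHt] tp n.
    by rewrite big_geq // add0n addn0 /u take0 cats0.
  rewrite -addSnnS IHt; last by lia.
  rewrite spine; last by lia.
  rewrite big_nat_recr //= subnn addn0.
  have -> : \sum_(0 <= t' < t) (O t' (n.+1 + (t - t'.+1))).+1 =
            \sum_(0 <= t' < t) (O t' (n + (t.+1 - t'.+1))).+1.
    by apply: eq_big_nat => t' /andP[_ h]; do 2 f_equal; lia.
  lia.
pose Sg n := \sum_(0 <= t < p) (O t (n + (p - t.+1))).+1.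
have rec : forall n, Bx x (n + p) = Sg n + Bx x n.
  move=> n; rewrite unroll // /u take_size; congr (_ + _).
  exact: iso_ball.
pose offs := flatten [seq kids t | t <- iota 0 p].
have offsP : forall t w, (t < p)%N -> w \in kids t -> w \in offs.
  by move=> t w tp wk; apply/flatten_mapP; exists t => //; rewrite mem_iota.
have kv : forall t w, (t < p)%N -> w \in kids t -> vert c w /\ (mm w < mm x)%N.
  move=> t w tp /mapP [j]; rewrite mem_filter mem_iota add0n => /andP[jn /andP[_ jc]] ->.
  have vw : vert c (rcons (u t) j) by rewrite vert_rcons uv jc.
  split => //; apply: mm_lt => //; last first.
    by exists (take t s ++ [:: j]); rewrite /u -cats1 -catA.
  move=> z vz iz; apply: nE; exists x, s, (take t s ++ j :: z).
  have eb : rcons (u t) j ++ z = x ++ (take t s ++ j :: z) by rewrite /u cat_rcons catA.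
  have stt : size (take t s) = t by rewrite size_take tp.
  split; split; rewrite -?eb //.
  - by case: (take t s).
  - exists t; split => //; first by rewrite size_cat stt /=; lia.
    by rewrite nth_cat stt ltnn subnn /= eq_sym.
set e := \max_(w <- offs) D w.
have upO : forall t, (t < p)%N -> up (O t) e.
  move=> t tp; apply: up_sum => w wk; have [h _] := HD w (kv t w tp wk); apply: up_mono h _.
  exact: (leq_bigmax_seq _ (offsP t w tp wk) isT).
have upS : up Sg e.
  apply: up_sum => t; rewrite mem_index_iota => /andP[_ tp].
  apply: (@up_ext _ (fun n => 1 + O t (n + (p - t.+1)))); first by move=> n; rewrite add1n.
  apply: up_add; first exact: up_const.
  exact: (up_shift _ (upO t tp)).
have loS : lo Sg e.
  have tin : forall t, (t < p)%N -> t \in index_iota 0 p by move=> t tp; rewrite mem_index_iota.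
  case: (eqVneq offs [::]) => [eo|ne].
    rewrite /e eo big_nil; apply: lo_one => n.
    exact: (leq_trans _ (leq_sum_mem (fun t => (O t (n + (p - t.+1))).+1) (tin 0%N p0))).
  have [w wo ew] := max_witness D ne.
  move: wo => /flatten_mapP [t]; rewrite mem_iota add0n => /andP[_ tp] wk.
  have [_ h] := HD w (kv t w tp wk); rewrite /e -ew; apply: lo_le h _ => n.
  apply: (leq_trans _ (leq_sum_mem (fun t => (O t (n + (p - t.+1))).+1) (tin t tp))).
  apply: (@leq_trans (Bx w (n + (p - t.+1)))); first by apply: ball_card_mono; lia.
  apply: (leq_trans (leq_sum_mem (fun w => Bx w (n + (p - t.+1))) wk)).
  exact: leqnSn.
have B1 : forall n, (1 <= Bx x n)%N by move=> n; exact: ball_card_ge1.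
have [h1 h2] := stepP p0 rec B1 upS loS.
by exists e.+1.
Qed.
End Poly.

End Part4.
Import Part4.

Module Part5.
Local Open Scope classical_set_scope.
Local Open Scope ring_scope.
Set Implicit Arguments. Unset Strict Implicit. Unset Printing Implicit Defensive.

Section RealFacts.
Variable R : realFieldType.

Lemma convex_pow n (x : R) : 0 <= x -> x <= 1 -> (1 + x) ^+ n <= 1 + x * (2 ^+ n - 1).
Proof.
move=> x0 x1; elim: n => [|n IH]; first by rewrite !expr0 subrr mulr0 addr0.
have P1 : 1 <= (2 : R) ^+ n by rewrite exprn_ege1 // ler1n.
rewrite exprS [X in _ <= 1 + x * (X - 1)]exprS.
have h : (1 + x) * (1 + x) ^+ n <= (1 + x) * (1 + x * (2 ^+ n - 1)).
  by rewrite ler_wpM2l // addr_ge0.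
apply: (le_trans h); move: P1; set P := (2 : R) ^+ n => P1.
have H3 : 0 <= x * (P - 1) * (1 - x).
  by apply: mulr_ge0; [apply: mulr_ge0 => //; lra | lra].
nra.
Qed.

Lemma lam_exists L : exists lam : R, 1 < lam /\ lam ^+ L <= 2.
Proof.
have P1 : 1 <= (2 : R) ^+ L by rewrite exprn_ege1 // ler1n.
have P0 : 0 < (2 : R) ^+ L by lra.
exists (1 + (2 ^+ L)^-1); split.
  by rewrite ltrDl invr_gt0.
apply: (le_trans (convex_pow _ _ _)).
- by rewrite invr_ge0 ltW.
- by rewrite invf_le1.
rewrite mulrBr mulVf ?gt_eqF // mulr1.
have : 0 < (2 ^+ L : R)^-1 by rewrite invr_gt0.
lra.
Qed.

Lemma pinv_mono (lam : R) m n : 1 <= lam -> (m <= n)%N -> lam ^- n <= lam ^- m.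
Proof.
move=> l1 mn; have l0 : 0 < lam by lra.
rewrite lef_pV2 ?posrE ?exprn_gt0 //; exact: ler_weXn2l.
Qed.

Lemma pinv_half (lam : R) n k : 1 <= lam -> lam ^+ k <= 2 -> lam ^- n / 2 <= lam ^- (n + k).
Proof.
move=> l1 lk; have l0 : 0 < lam by lra.
rewrite exprD invfM; apply: ler_wpM2l; first by rewrite invr_ge0 exprn_ge0 // ltW.
rewrite lef_pV2 ?posrE ?exprn_gt0 //.
Qed.

End RealFacts.

Section EsumFacts.
Variables (R : realType) (T : choiceType) (a : T -> \bar R).
Hypothesis a0 : forall x, (0 <= a x)%E.

Lemma esum_sub (A B : set T) : A `<=` B -> (\esum_(i in A) a i <= \esum_(i in B) a i)%E.
Proof.
move=> AB; rewrite esum_mkcond [X in (_ <= X)%E]esum_mkcond; apply: le_esum => i _.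
case: ifPn => [/set_mem /AB /mem_set -> //|_]; by case: ifP.
Qed.

Lemma esum_single (A : set T) x : A x -> (a x <= \esum_(i in A) a i)%E.
Proof. by move=> Ax; rewrite -esum_set1 //; apply: esum_sub => y ->. Qed.

Lemma esum_disj (A B C : set T) : A `&` B `<=` set0 -> A `<=` C -> B `<=` C ->
  (\esum_(i in A) a i + \esum_(i in B) a i <= \esum_(i in C) a i)%E.
Proof.
move=> AB AC BC; rewrite (esumID A C) //; apply: leeD; apply: esum_sub.
  by move=> x Ax; split => //; apply: AC.
by move=> x Bx; split; [apply: BC | move=> Ax; apply: (AB x)].
Qed.

End EsumFacts.

Definition goodAB (c : tree) x0 L z (AB : seq nat * seq nat) : Prop :=
  [/\ vert c (z ++ AB.1), vert c (z ++ AB.2), (0 < size AB.1 <= L)%N, (0 < size AB.2 <= L)%N &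
     [/\ isoV c (z ++ AB.1) x0, isoV c (z ++ AB.2) x0 &
       exists t, [/\ (t < size AB.1)%N, (t < size AB.2)%N & nth 0%N AB.1 t != nth 0%N AB.2 t]]].

Lemma take_eq_nth (u v : seq nat) k : (k <= size u)%N -> (k <= size v)%N ->
  (forall i, (i < k)%N -> nth 0%N u i = nth 0%N v i) -> take k u = take k v.
Proof.
move=> ku kv h; apply: (@eq_from_nth _ 0%N); first by rewrite !size_takel.
move=> i; rewrite size_takel // => hi; rewrite !nth_take //; exact: h.
Qed.

Lemma crossing (g : nat -> nat) m n : (g 0 < m)%N -> (m <= g n)%N ->
  exists k, [/\ (k < n)%N, (g k < m)%N & (m <= g k.+1)%N].
Proof.
move=> h0; elim: n => [|n IH] hn; first by lia.
case: (ltnP (g n) m) => h; first by exists n.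
have [k [k1 k2 k3]] := IH h; exists k; split => //; lia.
Qed.

Lemma next_exists (c : tree) x0 a b : vert c (x0 ++ a) -> vert c (x0 ++ b) -> a != [::] -> b != [::] ->
  isoV c (x0 ++ a) x0 -> isoV c (x0 ++ b) x0 ->
  (exists t, [/\ (t < size a)%N, (t < size b)%N & nth 0%N a t != nth 0%N b t]) ->
  forall z, vert c z -> isoV c z x0 -> exists AB, goodAB c x0 (maxn (size a) (size b)) z AB.
Proof.
move=> va vb a0 b0 ia ib [t [ta tb nab]] z vz izx.
have vx0 : vert c x0 by move: va; rewrite vert_cat => /andP[].
have [g [bij g0 gadj]] := tree_iso_sym izx.
have va' : vert (subtree c x0) a by move: va; rewrite vert_cat vx0.
have vb' : vert (subtree c x0) b by move: vb; rewrite vert_cat vx0.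
have sa := iso_size bij g0 gadj va'; have sb := iso_size bij g0 gadj vb'.
exists (g a, g b); split => /=.
- by rewrite vert_cat vz (iso_vert bij va').
- by rewrite vert_cat vz (iso_vert bij vb').
- by rewrite sa lt0n size_eq0 a0 leq_maxl.
- by rewrite sb lt0n size_eq0 b0 leq_maxr.
split.
- have := iso_sub bij g0 gadj va'; rewrite !subtree_cat => h.
  exact: tree_iso_trans (tree_iso_sym h) ia.
- have := iso_sub bij g0 gadj vb'; rewrite !subtree_cat => h.
  exact: tree_iso_trans (tree_iso_sym h) ib.
have ta' : take t.+1 a != take t.+1 b.
  apply/eqP => e; move: nab.
  by rewrite -(nth_take _ (ltnSn t) a) -(nth_take _ (ltnSn t) b) e eqxx.
have vta : vert (subtree c x0) (take t.+1 a).
  by move: va'; rewrite -{1}(cat_take_drop t.+1 a) vert_cat => /andP[].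
have vtb : vert (subtree c x0) (take t.+1 b).
  by move: vb'; rewrite -{1}(cat_take_drop t.+1 b) vert_cat => /andP[].
have gne : take t.+1 (g a) != take t.+1 (g b).
  apply/eqP; rewrite !(iso_take bij g0 gadj) // => e.
  by move/eqP: ta'; apply; apply: (iso_inj bij).
suff [i [hi hne]] : exists i, (i < t.+1)%N /\ nth 0%N (g a) i != nth 0%N (g b) i.
  by exists i; rewrite sa sb; split => //; apply: leq_trans hi _.
apply: boolp.contrapT => H; move/eqP: gne; apply; apply: take_eq_nth; rewrite ?sa ?sb //.
move=> i hi; apply/eqP; apply: boolp.contrapT => ne; apply: H; exists i; split => //.
exact/negP.
Qed.

Lemma exp_br (R : realType) (c : tree) : Eprop c -> (1%:E < @br R c)%E.
Proof.
case=> x0 [a [b [[va vb a0 b0] [ia ib dab]]]].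
set L := maxn (size a) (size b).
have NXe := next_exists va vb a0 b0 ia ib dab.
have [NX HNX] : {NX : seq nat -> seq nat * seq nat &
    forall z, vert c z -> isoV c z x0 -> goodAB c x0 L z (NX z)}.
  apply: (@boolp.choice _ _ (fun z AB => vert c z -> isoV c z x0 -> goodAB c x0 L z AB)) => z.
  case: (boolp.pselect (vert c z /\ isoV c z x0)) => [[h1 h2]|h].
    by have [AB hAB] := NXe z h1 h2; exists AB.
  by exists ([::], [::]) => h1 h2; exfalso; apply: h.
have vx0 : vert c x0 by move: va; rewrite vert_cat => /andP[].
have [lam [l1 lL]] := lam_exists R L.
have lam1 : 1 <= lam by exact: ltW.
have lam0 : 0 < lam by lra.
pose kap := lam ^- size x0 / 2.
have kap0 : 0 < kap by rewrite /kap divr_gt0 // invr_gt0 exprn_gt0.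
pose f (e : seq nat) := (lam ^- size e)%:E.
have f0 : forall e, (0 <= f e)%E by move=> e; rewrite lee_fin invr_ge0 exprn_ge0 // ltW.
have lamL : forall k, (k <= L)%N -> lam ^+ k <= 2.
  by move=> k kL; apply: le_trans lL; exact: ler_weXn2l.
have cutbound : forall pi, cutset c pi -> (kap%:E <= \esum_(e in pi) f e)%E.
  move=> pi [piE piC]; rewrite leNgt; apply/negP => htot.
  pose desc (z : seq nat) := [set e | exists r : seq nat, r != [::] /\ e = z ++ r].
  pose F (z : seq nat) := \esum_(e in pi `&` desc z) f e.
  pose P (z : seq nat) := (F z < ((lam ^- size z) / 2)%:E)%E.
  pose nxt (z : seq nat) := if `[< P (z ++ (NX z).1) >] then z ++ (NX z).1 else z ++ (NX z).2.
  have [path [pth0 pthS]] : exists path : nat -> seq nat,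
      path 0%N = x0 /\ forall k, path k.+1 = nxt (path k).
    by exists (fun k => iter k nxt x0).
  have Fle : forall z, (F z <= \esum_(e in pi) f e)%E by move=> z; apply: esum_sub => // e [].
  have Fge : forall z e, pi e -> desc z e -> (f e <= F z)%E.
    by move=> z e pe de; apply: esum_single.
  have step : forall z, vert c z -> isoV c z x0 -> P z -> exists r,
      [/\ nxt z = z ++ r, (0 < size r <= L)%N, vert c (nxt z), isoV c (nxt z) x0 & P (nxt z)].
    move=> z vz iz Pz; have [v1 v2 s1 s2 [i1 i2 [t [t1 t2 nt]]]] := HNX z vz iz.
    rewrite /nxt; case: (boolP `[< P (z ++ (NX z).1) >]) => [/asboolP hP|/asboolP hP].
      by exists (NX z).1.
    exists (NX z).2; split => //.
    rewrite /P ltNge; apply/negP => hB.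
    have hA : (((lam ^- size (z ++ (NX z).1)) / 2)%:E <= F (z ++ (NX z).1))%E.
      by rewrite leNgt; apply/negP.
    have hsum : (F (z ++ (NX z).1) + F (z ++ (NX z).2) <= F z)%E.
      apply: esum_disj => //.
      - move=> e [[_ [r1 [_ e1]]] [_ [r2 [_ e2]]]].
        move: e2; rewrite e1 -!catA => /catIl e3.
        have := congr1 (fun s => nth 0%N s t) e3; rewrite /= !nth_cat t1 t2 => /eqP.
        by rewrite (negbTE nt).
      - move=> e [pe [r [r0 er]]].
        split; first exact: pe.
        exists ((NX z).1 ++ r); split; last by rewrite er catA.
        by move: s1; case: (NX z).1.
      - move=> e [pe [r [r0 er]]].
        split; first exact: pe.
        exists ((NX z).2 ++ r); split; last by rewrite er catA.
        by move: s2; case: (NX z).2.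
    have hz : ((lam ^- size z / 2)%:E <= F z)%E.
      apply: le_trans hsum; apply: le_trans (leeD hA hB).
      rewrite -EFinD lee_fin !size_cat.
      have h1 := pinv_half (size z) lam1 (lamL _ (proj2 (andP s1))).
      have h2 := pinv_half (size z) lam1 (lamL _ (proj2 (andP s2))).
      lra.
    by move: Pz; rewrite /P ltNge hz.
  have inv : forall k, [/\ vert c (path k), isoV c (path k) x0 & P (path k)].
    elim=> [|k [vk ik pk]].
      by rewrite pth0; split => //; [exact: tree_iso_refl | exact: le_lt_trans (Fle x0) htot].
    by rewrite pthS; have [r [_ _ v i p]] := step _ vk ik pk; split.
  have pathS : forall k, exists r, path k.+1 = path k ++ r /\ (0 < size r <= L)%N.
    move=> k; have [vk ik pk] := inv k; have [r [e s _ _ _]] := step _ vk ik pk.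
    by exists r; rewrite pthS.
  have pref : forall k m, (k <= m)%N -> exists r, path m = path k ++ r.
    move=> k m /subnKC <-; elim: (m - k)%N => [|j [r hr]].
      by exists [::]; rewrite addn0 cats0.
    have [r' [e _]] := pathS (k + j); exists (r ++ r').
    by rewrite addnS e hr catA.
  have psize : forall k, (size x0 + k <= size (path k))%N.
    elim=> [|k IH]; first by rewrite addn0 pth0.
    have [r [e /andP[s _]]] := pathS k; rewrite e size_cat addnS -addn1 leq_add //.
  have psz : forall k, (k <= size (path k))%N by move=> k; exact: leq_trans (leq_addl _ _) (psize k).
  pose p n := take n (path n).
  have pr : ray c p.
    rewrite /ray; split; first by rewrite /p take0.
    move=> n; have [r [e _]] := pathS n.
    have sn : (n < size (path n.+1))%N by exact: psz.
    have sn' : (n <= size (path n))%N by exact: psz.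
    split.
      have [vn _ _] := inv n.+1.
      by move: vn; rewrite -{1}(cat_take_drop n.+1 (path n.+1)) vert_cat => /andP[].
    exists (nth 0%N (path n.+1) n); rewrite /p (take_nth 0%N sn) e takel_cat //.
  have [n hn] := piC p pr.
  set e := p n.+1 in hn.
  have se : size e = n.+1 by rewrite /e /p size_takel // psz.
  have epref : forall m, (n.+1 <= m)%N -> take n.+1 (path m) = e.
    move=> m hm; have [r hr] := pref _ _ hm; rewrite hr takel_cat ?psz //.
  have etot : (f e <= \esum_(e in pi) f e)%E by apply: esum_single.
  case: (leqP n.+1 (size x0)) => hx.
    have : (kap%:E < f e)%E.
      rewrite lte_fin /kap se; apply: (@lt_le_trans _ _ (lam ^- size x0)).
        by rewrite ltr_pdivrMr // ltr_pMr ?ltr1n // invr_gt0 exprn_gt0.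
      exact: pinv_mono.
    by move=> h; move: (lt_le_trans h etot); rewrite ltNge (ltW htot).
  have [k [hk1 hk2 hk3]] := @crossing (fun k => size (path k)) n.+1 n.+1 ltac:(by rewrite /= pth0) (psz n.+1).
  have [r [er sr]] := pathS k.
  have ek : e = path k ++ take (n.+1 - size (path k)) r.
    have [r2 hr2] := pref k.+1 n.+1 hk1.
    by rewrite /e /p hr2 takel_cat // er take_cat ltnNge (ltnW hk2) /=.
  have de : desc (path k) e.
    exists (take (n.+1 - size (path k)) r); split => //.
    by rewrite -size_eq0 size_take_min; move: sr => /andP[sr _]; rewrite -lt0n leq_min subn_gt0 hk2 sr.
  have := Fge _ _ hn de.
  have [_ _ Pk] := inv k.
  have : ((lam ^- size (path k) / 2)%:E <= f e)%E.
    rewrite lee_fin se.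
    apply: le_trans (pinv_half (size (path k)) lam1 (lamL (size r) (proj2 (andP sr)))) _.
    apply: pinv_mono => //; move: hk3; rewrite er size_cat => h3; apply: leq_trans h3 _; rewrite leq_add2l; by case/andP: sr.
  by move=> h1 h2; have := le_lt_trans (le_trans h1 h2) Pk; rewrite ltxx.
have ci : (kap%:E <= cut_inf c lam)%E.
  by apply: le_ereal_inf_tmp => _ [pi cpi <-]; exact: cutbound.
have : (lam%:E <= br c)%E.
  apply: ereal_sup_ubound; exists lam => //; split => //.
  by apply: lt_le_trans ci; rewrite lte_fin.
by apply: lt_le_trans; rewrite lte_fin.
Qed.

End Part5.
Import Part5.

Unset Implicit Arguments.
Local Open Scope classical_set_scope.
Local Open Scope ring_scope.

Lemma ball_card_size (c : tree) v : vert c v -> ((size v).+1 <= ball_card c (size v))%N.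
Proof.
move=> vv.
have -> : (size v).+1 = size [seq take k v | k <- iota 0 (size v).+1] by rewrite size_map size_iota.
apply: uniq_leq_size.
  rewrite map_inj_in_uniq ?iota_uniq // => k1 k2.
  rewrite !mem_iota !add0n !ltnS => h1 h2 e.
  by have := congr1 size e; rewrite !size_takel.
move=> w /mapP [k]; rewrite mem_iota add0n ltnS => /andP[_ hk] ->.
rewrite ball_mem size_takel // hk andbT.
by move: vv; rewrite -{1}(cat_take_drop k v) vert_cat => /andP[].
Qed.

Theorem proposition3p1 (R : realType) (c : tree) :
  infinite_tree c -> periodic_tree c ->
  (1%:E < @br R c)%E \/
  exists d : nat, (1 <= d)%N /\
    exists a b : R, [/\ 0 < a, 0 < b &
      forall n : nat, (1 <= n)%N ->
        a <= (ball_card c n)%:R / (n%:R ^+ d) <= b].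
Proof.
move=> inf [N perN].
case: (boolp.pselect (Eprop c)) => [hE|nE]; first by left; exact: exp_br.
right.
have [d [[B hB] [A hA]]] := poly_growth perN nE (isT : vert c [::]).
have hB' : forall n, (ball_card c n <= B * n.+1 ^ d)%N by exact: hB.
have hA' : forall n, (n.+1 ^ d <= A * ball_card c n)%N by exact: hA.
have A0 : (0 < A)%N by have := hA' 0%N; rewrite exp1n ball_card0 muln1.
have B0 : (0 < B)%N by have := hB' 0%N; rewrite exp1n ball_card0 muln1.
have d1 : (1 <= d)%N.
  rewrite lt0n; apply/negP => /eqP d0; apply: inf.
  apply: (sub_finite_set _ (finite_seq (Defs.ball c B))) => v /= vv.
  rewrite ball_mem; apply/andP; split => //.
  have := @ball_card_size c v vv; have := hB' (size v); rewrite d0 expn0 muln1.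
  by move=> h1 h2; exact: ltnW (leq_trans h2 h1).
exists d; split => //; exists (A%:R^-1), (B * 2 ^ d)%:R; split.
- by rewrite invr_gt0 ltr0n.
- by rewrite ltr0n muln_gt0 B0 expn_gt0.
move=> n n1.
have np : 0 < (n%:R : R) ^+ d by rewrite exprn_gt0 // ltr0n.
apply/andP; split.
  rewrite ler_pdivlMr // mulrC ler_pdivrMr ?ltr0n // -natrX -natrM ler_nat mulnC.
  apply: leq_trans (hA' n); apply: expn_mono; exact: leqnSn.
rewrite ler_pdivrMr // -natrX -natrM ler_nat.
apply: leq_trans (hB' n) _; rewrite -mulnA leq_mul2l -expnMn; apply/orP; right.
apply: expn_mono; lia.
Qed.
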